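(* Let $\mathfrak F=(X,\parallel,Y,S_\vee)$ be a frame satisfying (F0)–(F4). For $B\in\mathcal G(Y)$ define $\overline\zeta_S(B)=\{x\in X:\overline\eta_S(\Gamma x)\subseteq B\}$. Then $\overline\zeta_S(B)\in\mathcal G(X)$ and $\overline\zeta_S$ is the right residual of $\overline\eta_S:\mathcal G(X)\to\mathcal G(Y)$: for all $A\in\mathcal G(X)$ and $B\in\mathcal G(Y)$, $\overline\eta_S(A)\subseteq B$ iff $A\subseteq\overline\zeta_S(B)$.
   Context: Polarity $(X,\parallel,Y)$, ${\parallel}\subseteq X\times Y$, $I$ its complement. $U'=\{y:\forall x\in U\;x\parallel y\}$ for $U\subseteq X$, $V'=\{x:\forall y\in V\;x\parallel y\}$ for $V\subseteq Y$; stable sets $A=A''\subseteq X$ form $\mathcal G(X)$, co-stable sets $B=B''\subseteq Y$ form $\mathcal G(Y)$ (joins $(\bigcup A_j)''$). $x\preceq z$ iff $\{x\}'\subseteq\{z\}'$, similarly on $Y$; separated means these are partial orders; $\Gamma u$ is the up-set of $u$; closed elements are the sets $\Gamma u$. Frame $(X,\parallel,Y,S_\vee)$, $S_\vee\subseteq Y\times X$, $S_\vee x=\{y:yS_\vee x\}$, $yS_\vee=\{x:yS_\vee x\}$, $zS'_\vee x$ iff $\forall y(yS_\vee x\Rightarrow z\parallel y)$. Axioms (F0) $\forall x\exists y\,xIy$, $\forall y\exists x\,xIy$; (F1) separated; (F2) each $S_\vee x$ a closed element of $\mathcal G(Y)$; (F3) each $yS_\vee$ a down-set; (F4) for each $x$,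 $\{z:zS'_\vee x\}\in\mathcal G(X)$, for each $z$, $\{x:zS'_\vee x\}\in\mathcal G(X)$. $\overline\eta_S(A)=(\bigcup_{x\in A}S_\vee x)''$ for $A\in\mathcal G(X)$. *)

(* Defs.v *)
Set Implicit Arguments.

Section Polarity.
Variables (X Y : Type) (par : X -> Y -> Prop) (S : Y -> X -> Prop).

Definition sub {T : Type} (A B : T -> Prop) : Prop := forall t, A t -> B t.
Definition seteq {T : Type} (A B : T -> Prop) : Prop := forall t, A t <-> B t.

Definition primeX (U : X -> Prop) : Y -> Prop := fun y => forall x, U x -> par x y.
Definition primeY (V : Y -> Prop) : X -> Prop := fun x => forall y, V y -> par x y.

Definition stable (A : X -> Prop) : Prop := seteq (primeY (primeX A)) A.
Definition costable (B : Y -> Prop) : Prop := seteq (primeX (primeY B)) B.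

Definition precX (x z : X) : Prop := sub (primeX (fun u => u = x)) (primeX (fun u => u = z)).
Definition precY (y w : Y) : Prop := sub (primeY (fun u => u = y)) (primeY (fun u => u = w)).

Definition GammaX (x : X) : X -> Prop := fun z => precX x z.
Definition GammaY (y : Y) : Y -> Prop := fun w => precY y w.

Definition Sprime (z x : X) : Prop := forall y, S y x -> par z y.

Definition F0 : Prop :=
  (forall x, exists y, ~ par x y) /\ (forall y, exists x, ~ par x y).
Definition F1 : Prop :=
  (forall x z, precX x z -> precX z x -> x = z) /\
  (forall y w, precY y w -> precY w y -> y = w).
Definition F2 : Prop :=
  forall x, costable (fun y => S y x) /\ exists y0, seteq (fun y => S y x) (GammaY y0).
Definition F3 : Prop :=
  forall y x x', S y x -> precX x' x -> S y x'.
Definition F4 : Prop :=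
  (forall x, stable (fun z => Sprime z x)) /\ (forall z, stable (fun x => Sprime z x)).

Definition eta (A : X -> Prop) : Y -> Prop :=
  primeX (primeY (fun y => exists x, A x /\ S y x)).

Definition zeta (B : Y -> Prop) : X -> Prop := fun x => sub (eta (GammaX x)) B.

End Polarity.

(* Main.v *)
Require Import Defs.

Lemma zeta_char {X Y : Type} {par : X -> Y -> Prop} {S : Y -> X -> Prop} :
  F3 par S -> forall B : Y -> Prop, costable par B -> forall x,
  (zeta par S B x <-> forall w, primeY par B w -> Sprime par S w x).
Proof.
  intros H3 B HB x; split.
  - intros Hz w Hw y Hy. apply Hw. apply Hz.
    intros u Hu. apply Hu. exists x. split; [|exact Hy].
    unfold GammaX, precX, sub; auto.
  - intros H y Hy. apply (proj1 (HB y)). intros w Hw.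
    apply Hy. intros y' [z [Hz Hs]]. apply (H w Hw). eapply H3; eauto.
Qed.

Theorem proposition3p15 (X Y : Type) (par : X -> Y -> Prop) (S : Y -> X -> Prop) :
  F0 par -> F1 par -> F2 par S -> F3 par S -> F4 par S ->
  forall B : Y -> Prop, costable par B ->
    stable par (zeta par S B) /\
    (forall A : X -> Prop, stable par A ->
       (sub (eta par S A) B <-> sub A (zeta par S B))).
Proof.
  intros _ _ _ H3 [_ H4] B HB. split.
  - intros t; split.
    + intros Ht. apply (proj2 (zeta_char H3 B HB t)). intros w Hw.
      apply (proj1 (H4 w t)). intros y Hy. apply Ht.
      intros x Hx. apply Hy. exact (proj1 (zeta_char H3 B HB x) Hx w Hw).
    + intros Ht y Hy. apply Hy. exact Ht.
  - intros A _. split.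
    + intros H x Hx. apply (proj2 (zeta_char H3 B HB x)). intros w Hw y Hy.
      apply Hw. apply H. intros u Hu. apply Hu. exists x. auto.
    + intros H y Hy. apply (proj1 (HB y)). intros w Hw.
      apply Hy. intros y' [x [Hx Hs]].
      exact (proj1 (zeta_char H3 B HB x) (H x Hx) w Hw y' Hs).
Qed.
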